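(* Let $n\in\mathbb{N}$ and $m\geq 3$. Then \[ p'_{e,m}(n) -p'_{o,m}(n) = \begin{cases} (-1)^k, &\text{if } n=P_{m+2,k}\text{ or }n=Q_{m+2,k}\text{ for some }k\in\mathbb{N}, \\ 0, & \text{otherwise,} \end{cases} \] where $P_{m+2,k}=\frac{k(mk-(m-2))}{2}$ and $Q_{m+2,k}=\frac{k(mk+(m-2))}{2}$.
   Context: For $m\ge3$, $p'_{e,m}(n)$ (resp. $p'_{o,m}(n)$) is the number of partitions of $n$ into an even (resp. odd) number of distinct parts, each part being congruent to $0$, $1$ or $m-1$ modulo $m$. *)

(* Defs.v *)
From mathcomp Require Import all_boot all_order all_algebra.
Set Implicit Arguments. Unset Strict Implicit. Unset Printing Implicit Defensive.
Import GRing.Theory Num.Theory.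

Definition allowed_part (m k : nat) : bool :=
  (0 < k) && [|| k %% m == 0, k %% m == 1 | k %% m == m - 1].

(* Partitions of n into distinct parts = finite sets S of positive integers
   (all <= n, encoded in 'I_n.+1) whose elements sum to n. *)
Definition dist_parts (m n : nat) : {set {set 'I_n.+1}} :=
  [set S : {set 'I_n.+1} |
     (\sum_(i in S) (i : nat) == n) && [forall i in S, allowed_part m i]].

Definition p_even (m n : nat) : nat := #|[set S in dist_parts m n | ~~ odd #|S|]|.
Definition p_odd (m n : nat) : nat := #|[set S in dist_parts m n | odd #|S|]|.

Definition Ppoly (m k : nat) : nat := (k * (m * k - (m - 2))) %/ 2.
Definition Qpoly (m k : nat) : nat := (k * (m * k + (m - 2))) %/ 2.

(* Main.v *)
Set Warnings "-all".
Require Import Defs.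
From mathcomp Require Import all_boot all_order all_algebra.
From mathcomp Require Import ring lra zify.
Set Implicit Arguments. Unset Strict Implicit. Unset Printing Implicit Defensive.
Import GRing.Theory Num.Theory.
Local Open Scope ring_scope.

Section QB.
Variable R : comRingType.
Variable x : R.

Fixpoint qbin (n k : nat) : R :=
  match n, k with
  | 0, 0 => 1
  | 0, _.+1 => 0
  | _.+1, 0 => 1
  | n'.+1, k'.+1 => qbin n' k'.+1 + x ^+ (n' - k') * qbin n' k'
  end.

Lemma qbin0 n : qbin n 0 = 1. Proof. by case: n. Qed.

Lemma qbin_gt n k : (n < k)%N -> qbin n k = 0.
Proof.
elim: n k => [|n IH] [|k] //= H.
by rewrite !IH ?mulr0 ?addr0 // ltnW.
Qed.

Lemma qbin_nn n : qbin n n = 1.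
Proof. by elim: n => //= n ->; rewrite qbin_gt // subnn expr0 mul1r add0r. Qed.

Definition qpoch n : R := \prod_(i < n) (1 - x ^+ i.+1).

Lemma qpochS n : qpoch n.+1 = qpoch n * (1 - x ^+ n.+1).
Proof. by rewrite /qpoch big_ord_recr. Qed.

Lemma qbinSS n k : qbin n.+1 k.+1 = qbin n k.+1 + x ^+ (n - k) * qbin n k.
Proof. by []. Qed.

Lemma qbin_fact n k : (k <= n)%N -> qpoch k * qpoch (n - k) * qbin n k = qpoch n.
Proof.
elim: n k => [|n IH] [|k].
- by move=> _; rewrite /qpoch !big_ord0 !mulr1.
- by [].
- by move=> _; rewrite qbin0 subn0 /qpoch big_ord0 !mul1r mulr1.
rewrite ltnS leq_eqVlt => /orP [/eqP ->|Hk].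
  by rewrite qbin_nn subnn mulr1 /qpoch big_ord0 mulr1.
have H1 := IH _ Hk.
have H2 := IH _ (ltnW Hk).
have E : (n - k = (n - k.+1).+1)%N by rewrite subnSK.
rewrite qbinSS subSS.
rewrite E (qpochS (n - k.+1)) -E in H2.
transitivity ((1 - x ^+ (n - k)) * (qpoch k.+1 * qpoch (n - k.+1) * qbin n k.+1)
   + x ^+ (n - k) * (1 - x^+ k.+1) * (qpoch k * (qpoch (n - k.+1) * (1 - x ^+ (n - k))) * qbin n k)).
  rewrite E (qpochS (n - k.+1)) -E (qpochS k); ring.
rewrite H1 H2 (qpochS n).
have <- : x ^+ (n - k) * x ^+ k.+1 = x ^+ n.+1 by rewrite -exprD; congr (_ ^+ _); lia.
ring.
Qed.

Lemma qbinom n (y w : R) :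
  \prod_(i < n) (y + w * x ^+ i) =
  \sum_(k < n.+1) x ^+ 'C(k, 2) * qbin n k * w ^+ k * y ^+ (n - k).
Proof.
elim: n => [|n IH].
  by rewrite big_ord0 big_ord1 /= expr0 !mulr1.
rewrite big_ord_recr /= IH mulrDr big_distrl big_distrl /=.
rewrite [in RHS]big_ord_recl /= ?qbin0 subn0 bin0n expr0 !mulr1 !mul1r.
under [in RHS]eq_bigr => k _ do rewrite /bump leq0n add1n add0n mulrDr mulrDl mulrDl.
rewrite big_split /= addrA.
congr (_ + _).
  rewrite big_ord_recl /= bin0n ?qbin0 subn0 expr0 ?mul1r ?mulr1 -exprSr.
  congr (_ + _).
  rewrite [in RHS]big_ord_recr /= qbin_gt // ?mul0r ?mulr0 ?mul0r addr0.
  apply: eq_bigr => k _.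
  rewrite /bump leq0n add1n subSS.
  have -> : (n - k = (n - k.+1).+1)%N by rewrite subnSK.
  by rewrite (exprS y); ring.
apply: eq_bigr => k _.
have Hk := ltn_ord k.
have -> : x ^+ 'C(k.+1, 2) * (x ^+ (n - k) * qbin n k)
   = x ^+ 'C(k, 2) * qbin n k * x ^+ n.
  rewrite binS bin1 mulrA -exprD mulrAC -exprD.
  congr (_ ^+ _ * _); lia.
by rewrite subSS (exprS w); ring.
Qed.
End QB.

Local Open Scope nat_scope.

Lemma bin2S n : 'C(n.+1, 2) = 'C(n, 2) + n.
Proof. by rewrite binS bin1. Qed.

Lemma bin2x n : 'C(n, 2) * 2 = n * n.-1.
Proof. elim: n => // n IH; rewrite bin2S mulnDl IH; case: n {IH} => //= n; lia. Qed.

Lemma bin2D a b : 'C(a + b, 2) = 'C(a, 2) + a * b + 'C(b, 2).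
Proof.
elim: b => [|b IH]; first by rewrite addn0 muln0 !addn0.
by rewrite addnS !bin2S IH; lia.
Qed.

Definition Pn m a := m * 'C(a, 2) + a.
Definition Qn m a := m * 'C(a, 2) + (m - 1) * a.
Definition gx m N k := if (N <= k)%N then Pn m (k - N) else Qn m (N - k).

Lemma expo_eq m N k : (1 <= m)%N -> (k <= N + N)%N ->
  m * 'C(k, 2) + (m * N - 1) * (N + N - k) = m * 'C(N, 2) + (m * N - 1) * N + gx m N k.
Proof.
move=> Hm Hk; rewrite /gx /Pn /Qn.
case: N Hk => [|N] Hk.
  have -> : k = 0 by lia.
  by rewrite leqnn subnn bin0n /=; nia.
have [t Ht] : exists t, m * N.+1 - 1 = t by exists (m * N.+1 - 1).
have Ht' : t + 1 = m * N.+1 by nia.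
rewrite Ht.
case: (leqP N.+1 k) => H.
  have [a Ea] : exists a, k = N.+1 + a by exists (k - N.+1); lia.
  subst k.
  rewrite addKn bin2D.
  have -> : N.+1 + N.+1 - (N.+1 + a) = N.+1 - a by lia.
  have Ha : (a <= N.+1)%N by lia.
  nia.
have [a Ea] : exists a, N.+1 = k + a by exists (N.+1 - k); lia.
rewrite Ea addKn bin2D.
have -> : k + a + (k + a) - k = k + a + a by lia.
rewrite Ea in Ht'.
have := bin2x a.
case: a Ea Ht' => [|a] Ea Ht' Hb; first lia.
simpl in Hb. nia.
Qed.

Local Open Scope ring_scope.

Lemma coef_signX (k e n : nat) :
  ((-1) ^+ k * 'X^e : {poly int})`_n = if e == n then (-1) ^+ k else 0.
Proof.
rewrite -signr_odd mulr_sign -[in RHS]signr_odd.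
case: (odd k); rewrite ?coefN coefXn eq_sym; case: eqP => //= _; rewrite ?oppr0 //.
Qed.

Lemma coef_Pi (m n : nat) :
  (\prod_(i < n.+1 | allowed_part m i) (1 - 'X^i : {poly int}))`_n
  = (p_even m n)%:Z - (p_odd m n)%:Z.
Proof.
pose F (i : 'I_n.+1) : {poly int} := if allowed_part m i then - 'X^i else 0.
have -> : \prod_(i < n.+1 | allowed_part m i) (1 - 'X^i : {poly int})
         = \prod_(i < n.+1) (F i + 1).
  rewrite big_mkcond /=; apply: eq_bigr => i _; rewrite /F.
  by case: ifP => _; rewrite ?add0r // addrC.
rewrite bigA_distr coef_sum.
have E : forall J : {set 'I_n.+1},
   (\prod_i (if i \in J then F i else 1))`_n
   = if J \in dist_parts m n then (-1) ^+ #|J| else 0.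
  move=> J.
  rewrite -big_mkcond /= /dist_parts inE.
  case: (boolP [forall i in J, allowed_part m i]) => Hall.
    have -> : \prod_(i in J) F i = (-1) ^+ #|J| * 'X^(\sum_(i in J) (i : nat)).
      rewrite -prodrXr -prodrN; apply: eq_bigr => i iJ.
      by rewrite /F (forall_inP Hall i iJ).
    by rewrite coef_signX andbT.
  rewrite andbF.
  move/forall_inPn: Hall => [i iJ Hi].
  by rewrite (bigD1 i iJ) /= /F (negbTE Hi) mul0r coef0.
rewrite (eq_bigr _ (fun J _ => E J)) -big_mkcond /=.
rewrite (bigID (fun J : {set 'I_n.+1} => odd #|J|)) /= addrC.
have -> : p_even m n = \sum_(J in dist_parts m n | ~~ odd #|J|) 1%N.
  by rewrite /p_even sum1_card; apply: eq_card => J; rewrite !inE unfold_in /= !inE.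
have -> : p_odd m n = \sum_(J in dist_parts m n | odd #|J|) 1%N.
  by rewrite /p_odd sum1_card; apply: eq_card => J; rewrite !inE unfold_in /= !inE.
rewrite -!natz !natr_sum -sumrN.
congr (_ + _); apply: eq_bigr => J /andP [_ H].
  by rewrite -signr_odd (negbTE H).
by rewrite -signr_odd H.
Qed.

Definition ceq (T : nat) (p r : {poly int}) := exists s, p = r + 'X^T * s.

Lemma ceq_refl T p : ceq T p p.
Proof. by exists 0; rewrite mulr0 addr0. Qed.

Lemma ceq_trans T p q r : ceq T p q -> ceq T q r -> ceq T p r.
Proof. by move=> [s ->] [u ->]; exists (u + s); ring. Qed.

Lemma ceq_add T p p' r r' : ceq T p p' -> ceq T r r' -> ceq T (p + r) (p' + r').
Proof. by move=> [s ->] [u ->]; exists (s + u); ring. Qed.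

Lemma ceq_mul T p p' r r' : ceq T p p' -> ceq T r r' -> ceq T (p * r) (p' * r').
Proof. by move=> [s ->] [u ->]; exists (s * r' + p' * u + 'X^T * s * u); ring. Qed.

Lemma ceq_le T T' p r : (T' <= T)%N -> ceq T p r -> ceq T' p r.
Proof.
move=> H [s ->]; exists ('X^(T - T') * s).
by rewrite mulrA -exprD subnKC.
Qed.

Lemma ceq_XnM e T p r : ceq T p r -> ceq (e + T) ('X^e * p) ('X^e * r).
Proof. by move=> [s ->]; exists s; rewrite exprD; ring. Qed.

Lemma ceq_1X T e : (T <= e)%N -> ceq T (1 - 'X^e) 1.
Proof. by move=> H; exists (- 'X^(e - T)); rewrite mulrN -exprD subnKC. Qed.

Lemma ceq_prod1 T (I : Type) (s : seq I) (P : pred I) (F : I -> {poly int}) :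
  (forall i, P i -> ceq T (F i) 1) -> ceq T (\prod_(i <- s | P i) F i) 1.
Proof.
move=> H; apply: (big_ind (fun p => ceq T p 1)); first exact: ceq_refl.
  by move=> a b Ha Hb; rewrite -[1](mulr1 1); apply: ceq_mul.
exact: H.
Qed.

Lemma ceq_sum T (I : Type) (s : seq I) (P : pred I) (F G : I -> {poly int}) :
  (forall i, P i -> ceq T (F i) (G i)) ->
  ceq T (\sum_(i <- s | P i) F i) (\sum_(i <- s | P i) G i).
Proof.
move=> H; apply: (big_ind2 (ceq T)); first exact: ceq_refl.
  by move=> a b c d; apply: ceq_add.
exact: H.
Qed.

Lemma ceq_coef T p r n : ceq T p r -> (n < T)%N -> p`_n = r`_n.
Proof. by move=> [s ->] H; rewrite coefD coefXnM H addr0. Qed.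

Lemma allowed_block m N : (3 <= m)%N ->
  \prod_(0 <= i < (m * N.+1).+1 | allowed_part m i) (1 - 'X^i : {poly int}) =
  \prod_(0 <= i < (m * N).+1 | allowed_part m i) (1 - 'X^i)
  * ((1 - 'X^(m * N + 1)) * (1 - 'X^(m * N + m - 1)) * (1 - 'X^(m * N + m))).
Proof.
move=> Hm.
rewrite (big_cat_nat (n := (m * N).+1)) //=; last by rewrite mulnS; lia.
congr (_ * _).
rewrite big_mkcond /=.
have Hmod : forall r, (r < m)%N -> ((m * N + r) %% m = r)%N.
  by move=> r Hr; rewrite mulnC modnMDl modn_small.
rewrite big_ltn; last by rewrite mulnS; lia.
have -> : (m * N.+1).+1 = (m * N + m - 1).+2 by rewrite mulnS; lia.
rewrite big_nat_recr /=; last by lia.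
rewrite big_nat_recr /=; last by lia.
rewrite big1_seq; last first.
  move=> i /andP [_]; rewrite mem_index_iota => /andP [H1 H2].
  have [r [Er Hr1 Hr2]] : exists r, [/\ i = m * N + r, (2 <= r)%N & (r <= m - 2)%N].
    by exists (i - m * N)%N; split; lia.
  rewrite /allowed_part Er Hmod; last by lia.
  case: ifP => //; rewrite /= => /andP [_]. 
  case/or3P => /eqP; lia.
have A1 : allowed_part m (m * N).+1.
  rewrite /allowed_part -[(m * N).+1]addn1 Hmod ?eqxx ?orbT ?andbT //; lia.
have A2 : allowed_part m (m * N + m - 1).
  rewrite /allowed_part -addnBA; last lia.
  rewrite Hmod ?eqxx ?orbT ?andbT //; lia.
have A3 : allowed_part m (m * N + m - 1).+1.
  have -> : (m * N + m - 1).+1 = (N.+1 * m + 0)%N by rewrite mulSn; lia.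
  by rewrite /allowed_part modnMDl mod0n eqxx /= andbT; lia.
rewrite A1 A2 A3 mul1r.
have -> : (m * N + m - 1).+1 = (m * N + m)%N by lia.
by rewrite addn1 mulrA.
Qed.


Lemma RN m N : (3 <= m)%N ->
  \prod_(0 <= i < (m * N).+1 | allowed_part m i) (1 - 'X^i : {poly int}) =
  \prod_(i < N) ((1 - 'X^(m * i + 1)) * (1 - 'X^(m * i + m - 1)) * (1 - 'X^(m * i + m))).
Proof.
move=> Hm; elim: N => [|N IH].
  by rewrite muln0 big_ord0 big_mkcond big_nat1.
by rewrite allowed_block // IH big_ord_recr.
Qed.

Lemma qpochE m n : qpoch ('X^m : {poly int}) n = \prod_(0 <= i < n) (1 - 'X^(m * i.+1)).
Proof. by rewrite /qpoch big_mkord; apply: eq_bigr => i _; rewrite exprM. Qed.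

Lemma oneX_neq0 e : (0 < e)%N -> (1 - 'X^e : {poly int}) != 0.
Proof.
move=> He; apply/eqP => /(congr1 (fun p : {poly int} => p`_0)).
rewrite coefB coef1 coefXn coef0 /=; case: e He => // e _ /=.
Qed.

Lemma qpoch_neq0 m n : (0 < m)%N -> qpoch ('X^m : {poly int}) n != 0.
Proof.
move=> Hm; rewrite /qpoch; apply/prodf_neq0 => i _.
by rewrite -exprM oneX_neq0 // muln_gt0 Hm.
Qed.

Lemma qpoch_split m k n : (k <= n)%N ->
  qpoch ('X^m : {poly int}) n = qpoch ('X^m) k * \prod_(k <= i < n) (1 - 'X^(m * i.+1)).
Proof. by move=> H; rewrite !qpochE (big_cat_nat (n := k)). Qed.

Lemma qbin_ceq m n k : (0 < m)%N -> (k <= n)%N ->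
  ceq (m * (minn k (n - k)).+1) (qpoch ('X^m : {poly int}) n * qbin ('X^m) n k) 1.
Proof.
move=> Hm Hk.
have E1 : qpoch ('X^m : {poly int}) k * qbin ('X^m) n k = \prod_(n - k <= i < n) (1 - 'X^(m * i.+1)).
  apply: (mulfI (qpoch_neq0 (n - k) Hm)).
  rewrite mulrA [qpoch _ (n - k) * _]mulrC qbin_fact // -qpoch_split //; exact: leq_subr.
rewrite (qpoch_split m Hk) mulrAC E1 -[X in ceq _ _ X](mulr1 1).
apply: ceq_mul; rewrite big_nat_cond; apply: ceq_prod1 => i /andP [/andP [H1 H2] _];
  apply: ceq_1X; rewrite leq_pmul2l //; lia.
Qed.

Lemma sign_shift (k N : nat) : (-1) ^+ k = (-1) ^+ N * (-1) ^+ (k + N) :> {poly int}.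
Proof.
by rewrite exprD mulrCA -exprD addnn -mul2n exprM sqrrN expr1n expr1n mulr1.
Qed.

Lemma evalB m N : (1 <= m)%N ->
  \prod_(i < N) ((1 - 'X^(m * i + m - 1)) * (1 - 'X^(m * i + 1)) : {poly int}) =
  \sum_(k < (N + N).+1) (-1) ^+ (k + N) * 'X^(gx m N k) * qbin ('X^m) (N + N) k.
Proof.
move=> Hm.
have Q := qbinom ('X^m : {poly int}) (N + N) ('X^(m * N - 1)) (-1).
set E := (m * 'C(N, 2) + (m * N - 1) * N)%N.
have Hc : ((-1) ^+ N * 'X^E : {poly int}) != 0.
  by rewrite mulf_neq0 ?signr_eq0 // monic_neq0 // monicXn.
apply: (mulfI Hc).
rewrite big_distrr /=.
have -> : \sum_(k < (N + N).+1) (-1) ^+ N * 'X^E * ((-1) ^+ (k + N) * 'X^(gx m N k) * qbin ('X^m) (N + N) k)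
  = \sum_(k < (N + N).+1) ('X^m) ^+ 'C(k, 2) * qbin ('X^m : {poly int}) (N + N) k * (-1) ^+ k * 'X^(m * N - 1) ^+ (N + N - k).
  apply: eq_bigr => k _.
  rewrite (sign_shift k N) -!exprM -[in RHS](mulrC (qbin _ _ _)) !mulrA.
  have HE : 'X^E * 'X^(gx m N k) = 'X^(m * 'C(k, 2)) * 'X^((m * N - 1) * (N + N - k)) :> {poly int}.
    by rewrite -!exprD /E -expo_eq // -ltnS.
  transitivity ((-1) ^+ N * (-1) ^+ (k + N) * qbin ('X^m : {poly int}) (N + N) k * ('X^E * 'X^(gx m N k))); first ring.
  rewrite HE; ring.
rewrite -Q {Q} big_split_ord /=.
have L1 : \prod_(i < N) ('X^(m * N - 1) + (-1) * ('X^m : {poly int}) ^+ (lshift N i))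
   = (-1) ^+ N * 'X^(m * 'C(N, 2)) * \prod_(i < N) (1 - 'X^(m * i + m - 1)).
  transitivity (\prod_(i < N) (- ('X^(m * i) : {poly int}) * (1 - 'X^(m * (N - i) - 1)))).
    apply: eq_bigr => i _ /=.
    have Hi := ltn_ord i.
    rewrite -exprM.
    have -> : (m * N - 1 = m * i + (m * (N - i) - 1))%N.
      have -> : (m * N = m * i + m * (N - i))%N by rewrite -mulnDr subnKC // ltnW.
      have : (1 <= m * (N - i))%N by rewrite muln_gt0 subn_gt0 Hi; lia.
      lia.
    rewrite exprD; ring.
  rewrite big_split /= prodrN card_ord prodrXr.
  have -> : (\sum_(i < N) m * i = m * 'C(N, 2))%N.
    by rewrite -big_distrr /= -bin2_sum big_mkord.
  congr (_ * _).
  rewrite (reindex_inj rev_ord_inj) /=; apply: eq_bigr => i _.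
  have Hi := ltn_ord i.
  congr (1 - 'X^_).
  have -> : (N - (N - i.+1) = i.+1)%N by lia.
  rewrite mulnS; lia.
have L2 : \prod_(i < N) ('X^(m * N - 1) + (-1) * ('X^m : {poly int}) ^+ (rshift N i))
   = 'X^((m * N - 1) * N) * \prod_(i < N) (1 - 'X^(m * i + 1)).
  have -> : 'X^((m * N - 1) * N) = \prod_(i < N) 'X^(m * N - 1) :> {poly int}.
    by rewrite prodr_const card_ord exprM.
  rewrite -big_split /=.
  apply: eq_bigr => i _.
  have Hi := ltn_ord i.
  rewrite -exprM.
  have -> : (m * (N + i) = m * N - 1 + (m * i + 1))%N.
    have : (1 <= m * N)%N by rewrite muln_gt0; lia.
    rewrite mulnDr; lia.
  rewrite exprD; ring.
rewrite L1 L2 big_split /= /E exprD; ring.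
Qed.

Local Open Scope nat_scope.

Lemma Ppoly_eq m k : 2 <= m -> Ppoly m k = Pn m k.
Proof.
move=> Hm; rewrite /Ppoly /Pn.
have H := bin2x k.
have -> : k * (m * k - (m - 2)) = (m * 'C(k, 2) + k) * 2.
  case: k H => [|k] H; first by rewrite !muln0 /=; lia.
  simpl in H. nia.
by rewrite mulnK.
Qed.

Lemma Qpoly_eq m k : 2 <= m -> Qpoly m k = Qn m k.
Proof.
move=> Hm; rewrite /Qpoly /Qn.
have H := bin2x k.
have -> : k * (m * k + (m - 2)) = (m * 'C(k, 2) + (m - 1) * k) * 2.
  case: k H => [|k] H; first by rewrite !muln0 /=; lia.
  simpl in H. nia.
by rewrite mulnK.
Qed.

Lemma Pn_lt m a b : a < b -> Pn m a < Pn m b.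
Proof.
elim: b => // b IH; rewrite ltnS leq_eqVlt => /orP [/eqP ->|H].
  by rewrite /Pn bin2S; lia.
apply: (ltn_trans (IH H)); rewrite /Pn bin2S; lia.
Qed.

Lemma Pn_le m a b : a <= b -> Pn m a <= Pn m b.
Proof. by rewrite leq_eqVlt => /orP [/eqP ->|H] //; apply: ltnW; apply: Pn_lt. Qed.

Lemma Qn_lt m a b : 2 <= m -> a < b -> Qn m a < Qn m b.
Proof.
move=> Hm; elim: b => // b IH; rewrite ltnS leq_eqVlt => /orP [/eqP ->|H].
  by rewrite /Qn bin2S; nia.
apply: (ltn_trans (IH H)); rewrite /Qn bin2S; nia.
Qed.

Lemma Pn_inj m a b : Pn m a = Pn m b -> a = b.
Proof.
move=> E; case: (ltngtP a b) => // H.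
  by have := Pn_lt m H; rewrite E ltnn.
by have := Pn_lt m H; rewrite E ltnn.
Qed.

Lemma Qn_inj m a b : 2 <= m -> Qn m a = Qn m b -> a = b.
Proof.
move=> Hm E; case: (ltngtP a b) => // H.
  by have := Qn_lt Hm H; rewrite E ltnn.
by have := Qn_lt Hm H; rewrite E ltnn.
Qed.

Lemma PQ_eq m a b : 3 <= m -> Pn m a = Qn m b -> a = 0 /\ b = 0.
Proof.
move=> Hm E.
case: (leqP a b) => H.
  have H1 := Pn_le m H.
  have H2 : Pn m b + b <= Qn m b by rewrite /Pn /Qn; nia.
  split; last by lia.
  have Hb : b = 0 by lia.
  by move: H; rewrite Hb; lia.
have H1 := Pn_le m H.
move: H1; rewrite E /Pn /Qn bin2S; nia.
Qed.

Lemma Pn_ge m a : a <= Pn m a.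
Proof. rewrite /Pn; lia. Qed.

Lemma Qn_ge m a : 2 <= m -> a <= Qn m a.
Proof. move=> Hm; rewrite /Qn; nia. Qed.

Lemma gx_inj m N k1 k2 : 3 <= m -> gx m N k1 = gx m N k2 -> k1 = k2.
Proof.
move=> Hm; rewrite /gx.
case: (leqP N k1) => H1; case: (leqP N k2) => H2 E.
- have := Pn_inj E; lia.
- have [_ ] := PQ_eq Hm E; lia.
- have [_ ] := PQ_eq Hm (esym E); lia.
- have := Qn_inj (ltnW Hm) E; lia.
Qed.

Lemma gx_bound m N k : 3 <= m -> k <= N + N ->
  N.+1 <= gx m N k + m * (minn k (N + N - k)).+1.
Proof.
move=> Hm Hk; rewrite /gx.
case: (leqP N k) => H.
  have := Pn_ge m (k - N).
  have -> : minn k (N + N - k) = N + N - k by lia.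
  nia.
have := @Qn_ge m (N - k) (ltnW Hm).
have -> : minn k (N + N - k) = k by lia.
nia.
Qed.

Local Open Scope ring_scope.

Lemma main_coef m n : (3 <= m)%N ->
  (p_even m n)%:Z - (p_odd m n)%:Z =
  \sum_(k < (n + n).+1) (if gx m n k == n then (-1) ^+ (k + n) else 0).
Proof.
move=> Hm.
have Hm1 : (1 <= m)%N by lia.
rewrite -coef_Pi.
have C1 : ceq n.+1 (\prod_(0 <= i < (m * n).+1 | allowed_part m i) (1 - 'X^i : {poly int}))
                   (\prod_(i < n.+1 | allowed_part m i) (1 - 'X^i)).
  rewrite (big_cat_nat (n := n.+1)) //=; last by rewrite ltnS; nia.
  rewrite big_mkord -[X in ceq _ _ X]mulr1; apply: ceq_mul; first exact: ceq_refl.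
  rewrite big_nat_cond; apply: ceq_prod1 => i /andP [/andP [H1 _] _].
  exact: ceq_1X.
have C2 : ceq n.+1 (qpoch ('X^m : {poly int}) (n + n) *
                    \prod_(i < n) ((1 - 'X^(m * i + m - 1)) * (1 - 'X^(m * i + 1))))
                   (\prod_(0 <= i < (m * n).+1 | allowed_part m i) (1 - 'X^i : {poly int})).
  rewrite RN // (qpoch_split m (leq_addr n n)).
  apply: (@ceq_trans _ _ (qpoch ('X^m) n * 1 * \prod_(i < n) ((1 - 'X^(m * i + m - 1)) * (1 - 'X^(m * i + 1))))).
    apply: ceq_mul; last exact: ceq_refl.
    apply: ceq_mul; first exact: ceq_refl.
    rewrite big_nat_cond; apply: ceq_prod1 => i /andP [/andP [H1 _] _].
    apply: ceq_1X; nia.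
  rewrite mulr1 /qpoch -big_split /=.
  have -> : \prod_(i < n) ((1 - 'X^m ^+ i.+1) * ((1 - 'X^(m * i + m - 1)) * (1 - 'X^(m * i + 1))))
         = \prod_(i < n) ((1 - 'X^(m * i + 1)) * (1 - 'X^(m * i + m - 1)) * (1 - 'X^(m * i + m))) :> {poly int}.
    apply: eq_bigr => i _; rewrite -exprM.
    have -> : (m * i.+1 = m * i + m)%N by rewrite mulnS addnC.
    ring.
  exact: ceq_refl.
have C3 : ceq n.+1 (qpoch ('X^m : {poly int}) (n + n) *
                    \prod_(i < n) ((1 - 'X^(m * i + m - 1)) * (1 - 'X^(m * i + 1))))
                   (\sum_(k < (n + n).+1) (-1) ^+ (k + n) * 'X^(gx m n k)).
  rewrite evalB // big_distrr /=; apply: ceq_sum => k _.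
  have Hk : (k <= n + n)%N by rewrite -ltnS.
  have -> : qpoch ('X^m : {poly int}) (n + n) * ((-1) ^+ (k + n) * 'X^(gx m n k) * qbin ('X^m) (n + n) k)
     = (-1) ^+ (k + n) * ('X^(gx m n k) * (qpoch ('X^m : {poly int}) (n + n) * qbin ('X^m) (n + n) k)).
    ring.
  apply: ceq_mul; first exact: ceq_refl.
  rewrite -[X in ceq _ _ X]mulr1.
  apply: (ceq_le (gx_bound Hm Hk)).
  by apply: ceq_XnM; apply: qbin_ceq.
rewrite -(ceq_coef C1) // -(ceq_coef C2) // (ceq_coef C3) // coef_sum.
by apply: eq_bigr => k _; rewrite coef_signX.
Qed.

Lemma sgn2 (a b : nat) : (-1) ^+ (a + (b + b)) = (-1) ^+ a :> int.
Proof. by rewrite exprD addnn -mul2n exprM sqrrN !expr1n mulr1. Qed.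

Lemma sum_single m n (k0 : nat) : (3 <= m)%N -> (k0 < (n + n).+1)%N -> gx m n k0 = n ->
  \sum_(k < (n + n).+1) (if gx m n k == n then (-1) ^+ (k + n) else 0) = (-1) ^+ (k0 + n) :> int.
Proof.
move=> Hm Hk0 E.
rewrite (bigD1 (Ordinal Hk0)) //= E eqxx big1 ?addr0 // => k Hk.
case: eqP => // Ek; exfalso; move/eqP: Hk; apply; apply/val_inj => /=.
by apply: (@gx_inj m n); rewrite ?Ek ?E.
Qed.

Theorem theorem2p7 (m n : nat) (hm : (3 <= m)%N) :
  (forall k : nat, (n = Ppoly m k \/ n = Qpoly m k) ->
     (p_even m n)%:Z - (p_odd m n)%:Z = (-1) ^+ k) /\
  ((forall k : nat, n <> Ppoly m k /\ n <> Qpoly m k) ->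
     (p_even m n)%:Z - (p_odd m n)%:Z = 0).
Proof.
have hm2 : (2 <= m)%N by lia.
rewrite main_coef //; split.
  move=> k [E|E].
    rewrite Ppoly_eq // in E.
    have Hk : (k <= n)%N by rewrite E; apply: Pn_ge.
    rewrite (@sum_single m n (n + k)) //; last first.
      by rewrite /gx leq_addr addKn -E.
      by lia.
    have -> : (n + k + n = k + (n + n))%N by lia.
    by rewrite sgn2.
  rewrite Qpoly_eq // in E.
  have Hk : (k <= n)%N by rewrite E; apply: Qn_ge.
  rewrite (@sum_single m n (n - k)) //; last first.
    rewrite /gx; case: k E Hk => [|k] E Hk.
      by rewrite subn0 leqnn subnn E /Pn /Qn !muln0.
    have -> : (n <= n - k.+1)%N = false by lia.
    by rewrite subKn // E.
    by lia.
  rewrite -(sgn2 (n - k + n) k).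
  have -> : (n - k + n + (k + k) = k + (n + n))%N by lia.
  by rewrite sgn2.
move=> Hnone; apply: big1 => k _.
case: eqP => // E; exfalso; move: E; rewrite /gx.
case: leqP => _ E.
  by apply: (proj1 (Hnone (k - n)%N)); rewrite Ppoly_eq.
by apply: (proj2 (Hnone (n - k)%N)); rewrite Qpoly_eq.
Qed.
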